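(* Let $l\ge2$ and $1\le i\le l-1$ be integers, and let $\beta_1,\dots,\beta_i,\eta$ be real numbers in $(0,1)$ with $\eta=1-(\beta_1+\cdots+\beta_i)$; write $\overline{\boldsymbol\beta}=(\beta_1,\dots,\beta_i,\eta)$. Then there exist constants $C,N$ depending only on $\overline{\boldsymbol\beta}$ such that for all integers $n\ge N$ and all integers $d>1$, $$\frac{1}{d^{l-1}}\sum_{1\le h_1,\dots,h_i\le d-1}\Big|\beta_1 e\big(\tfrac{h_1}{d}\big)+\cdots+\beta_i e\big(\tfrac{h_i}{d}\big)+\eta\Big|^n\le C\,\frac{\log n}{\sqrt n},$$ where $e(x)=e^{2\pi i x}$. *)

(* Defs.v *)
From HB Require Import structures.
From mathcomp Require Import all_boot all_order all_algebra.
From mathcomp Require Import all_classical all_reals all_analysis.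
Set Implicit Arguments. Unset Strict Implicit. Unset Printing Implicit Defensive.
Import Order.TTheory GRing.Theory Num.Theory.
Local Open Scope ring_scope.

(* |beta_1 e(h_1/d) + ... + beta_i e(h_i/d) + eta|, with e(x) = exp(2 pi i x),
   written out as the modulus sqrt(Re^2 + Im^2) of the complex number. *)
Definition expsum_mod (R : realType) (i : nat) (beta : 'I_i -> R) (eta : R)
    (d : nat) (h : 'I_i -> nat) : R :=
  Num.sqrt ((\sum_(j < i) beta j * cos (2 * pi * (h j)%:R / d%:R) + eta) ^+ 2
          + (\sum_(j < i) beta j * sin (2 * pi * (h j)%:R / d%:R)) ^+ 2).

(* Main.v *)
Require Import Defs.
From HB Require Import structures.
From mathcomp Require Import all_boot all_order all_algebra.
From mathcomp Require Import all_classical all_reals all_analysis.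
From mathcomp Require Import ring lra.
Import Order.TTheory GRing.Theory Num.Theory.
Local Open Scope ring_scope.
Section S.
Variable R : realType.

Lemma mono_deriv (f df : R -> R) : (forall x : R, is_derive x (1:R) f (df x)) ->
  (forall x, 0 <= x -> 0 <= df x) -> forall y, 0 <= y -> f 0 <= f y.
Proof.
move=> D P y; rewrite le_eqVlt => /predU1P[<-//|y0].
have [|c cin] := MVT y0 (fun x _ => D x).
  apply: derivable_within_continuous => x _.
  exact: ex_derive.
rewrite in_itv /= in cin; case/andP: cin => c0 _.
move=> /eqP; rewrite subr_eq => /eqP ->.
by rewrite lerDr mulr_ge0 // ?P // ltW // subr_gt0.
Qed.

Lemma sin_le_id (y : R) : 0 <= y -> sin y <= y.
Proof.
move=> y0.
have := @mono_deriv (fun x : R => x - sin x) (fun x : R => 1 - cos x).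
move=> H; have /= := H _ _ y y0.
rewrite sin0 subr0 subr_ge0; apply => x.
  by move=> _; rewrite subr_ge0 cos_le1.
Qed.

Lemma cos_ge (y : R) : 0 <= y -> 1 - y ^+ 2 / 2 <= cos y.
Proof.
move=> y0.
have D : forall x : R, is_derive x 1 (fun x0 : R => cos x0 - 1 + x0 ^+ 2 / 2) (- sin x + x).
  move=> x; apply: is_derive_eq.
  rewrite !(scaler0, subr0, add0r, mulr0); congr (_ + _).
  change (2^-1 * (x * 1 + x * 1) = x).
  by field.
have := @mono_deriv _ _ D.
rewrite cos0 subrr add0r expr0n /= mul0r => H.
have Hn : forall x : R, 0 <= x -> 0 <= - sin x + x.
  by move=> x x0; rewrite addrC subr_ge0 sin_le_id.
have := H Hn y y0.
lra.
Qed.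

Lemma scR (a b : R) : a *: b = a * b. Proof. by []. Qed.
Lemma algR (a : R) : a *: (1 : R) = a. Proof. by rewrite scR mulr1. Qed.

Lemma sin_ge (y : R) : 0 <= y -> y - y ^+ 3 / 6 <= sin y.
Proof.
move=> y0.
have D : forall x : R, is_derive x 1 (fun x0 : R => sin x0 - x0 + x0 ^+ 3 / 6) (cos x - 1 + x ^+ 2 / 2).
  move=> x; apply: is_derive_eq.
  by rewrite !(scR, algR); field.
have := @mono_deriv _ _ D.
rewrite sin0 subrr add0r expr0n /= mul0r => H.
have Hn : forall x : R, 0 <= x -> 0 <= cos x - 1 + x ^+ 2 / 2.
  by move=> x x0; have := cos_ge x x0; lra.
have := H Hn y y0.
lra.
Qed.

Lemma cos_le (y : R) : 0 <= y -> cos y <= 1 - y ^+ 2 / 2 + y ^+ 4 / 24.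
Proof.
move=> y0.
have D : forall x : R, is_derive x 1 (fun x0 : R => 1 - x0 ^+ 2 / 2 + x0 ^+ 4 / 24 - cos x0) (- x + x ^+ 3 / 6 + sin x).
  move=> x; apply: is_derive_eq.
  by rewrite !(scR, algR); field.
have := @mono_deriv _ _ D.
rewrite cos0 expr0n /= mul0r expr0n /= mul0r subr0 addr0 subrr => H.
have Hn : forall x : R, 0 <= x -> 0 <= - x + x ^+ 3 / 6 + sin x.
  by move=> x x0; have := sin_ge x x0; lra.
have := H Hn y y0.
lra.
Qed.

Lemma omc (y : R) : 0 <= y <= pi -> y ^+ 2 / 16 <= 1 - cos y.
Proof.
case/andP=> y0 ypi.
have pi4 : pi <= 4 :> R.
  by have [/andP[_ h] _] := @pihalf_02_cos_pihalf R; lra.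
have [y2|y2] := leP y 2.
  have := cos_le y y0.
  have h4 : y ^+ 4 <= 4 * y ^+ 2.
    have : y ^+ 2 <= 4 by nra.
    rewrite (_ : y ^+ 4 = y ^+ 2 * y ^+ 2); last by rewrite -exprD.
    move=> h; nra.
  have := sqr_ge0 y; lra.
have c2 : cos y <= cos 2.
  rewrite le_eqVlt; apply/orP; right.
  have p2 := pi_ge2 R.
  rewrite ltr_cos // in_itv /=; apply/andP; split => //; lra.
have := @cos2_lt0 R.
have : y ^+ 2 <= 16 by nra.
lra.
Qed.

Lemma cos2piB (x : R) : cos (2 * pi * (1 - x)) = cos (2 * pi * x).
Proof.
rewrite mulrBr mulr1 cosB (_ : 2 * pi = pi *+ 2); last by rewrite mulr_natl.
by rewrite cos2pi sin2pi mul1r mul0r addr0.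
Qed.

Lemma far (x d : R) : 0 <= x <= 1 -> 0 <= d -> d <= x -> d <= 1 - x ->
  d ^+ 2 <= 1 - cos (2 * pi * x).
Proof.
move=> /andP[x0 x1] d0.
have key : forall z : R, 0 <= z -> z <= 1/2 -> z ^+ 2 <= 1 - cos (2 * pi * z).
  move=> z z0 z1.
  have p2 := pi_ge2 R.
  have := @omc (2 * pi * z).
  rewrite exprMn exprMn.
  have h1 : 0 <= pi * z by apply: mulr_ge0 => //; lra.
  have h2 : 0 <= pi * (1 - 2 * z) by apply: mulr_ge0; lra.
  have pz: 0 <= 2 * pi * z <= pi by apply/andP; split; nra.
  move=> /(_ pz) h.
  have : 0 <= ((pi : R) ^+ 2 - 4) * z ^+ 2 by apply: mulr_ge0; [nra | exact: sqr_ge0].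
  have : 0 <= z ^+ 2 by exact: sqr_ge0.
  move=> *; nra.
move=> dx d1x.
have [xh|xh] := leP x (1/2).
  have := key x x0 xh; nra.
rewrite -cos2piB.
have := key (1 - x); nra.
Qed.

Lemma sqrt_le (X Y : R) : 0 <= Y -> X <= Y ^+ 2 -> Num.sqrt X <= Y.
Proof.
move=> Y0 h; rewrite -(ger0_norm Y0) -sqrtr_sqr; exact: ler_wsqrtr.
Qed.

Lemma tri2 (p q r s : R) :
  Num.sqrt ((p + q) ^+ 2 + (r + s) ^+ 2) <= Num.sqrt (p ^+ 2 + r ^+ 2) + Num.sqrt (q ^+ 2 + s ^+ 2).
Proof.
set u := Num.sqrt (p ^+ 2 + r ^+ 2); set v := Num.sqrt (q ^+ 2 + s ^+ 2).
have u0 : 0 <= u := sqrtr_ge0 _.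
have v0 : 0 <= v := sqrtr_ge0 _.
have u2 : u ^+ 2 = p ^+ 2 + r ^+ 2 by rewrite sqr_sqrtr // addr_ge0 // sqr_ge0.
have v2 : v ^+ 2 = q ^+ 2 + s ^+ 2 by rewrite sqr_sqrtr // addr_ge0 // sqr_ge0.
have uv0 : 0 <= u * v by exact: mulr_ge0.
have h2 : (p * q + r * s) ^+ 2 <= (u * v) ^+ 2.
  rewrite exprMn u2 v2.
  have := sqr_ge0 (p * s - r * q); nra.
have h : p * q + r * s <= u * v by nra.
apply: sqrt_le; first exact: addr_ge0.
nra.
Qed.

Lemma trisum k (a b : 'I_k -> R) :
  Num.sqrt ((\sum_(j < k) a j) ^+ 2 + (\sum_(j < k) b j) ^+ 2) <=
  \sum_(j < k) Num.sqrt (a j ^+ 2 + b j ^+ 2).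
Proof.
apply: (big_rec3 (fun u v w => Num.sqrt (u ^+ 2 + v ^+ 2) <= w)).
  by rewrite expr0n /= addr0 sqrtr0.
move=> j u v w _ h.
apply: le_trans (tri2 _ _ _ _) _.
exact: lerD.
Qed.

Lemma geo k (beta : 'I_k.+1 -> R) (eta : R) (th : 'I_k.+1 -> R) :
  (forall j, 0 < beta j) -> 0 < eta < 1 -> eta = 1 - \sum_(j < k.+1) beta j ->
  Num.sqrt ((\sum_(j < k.+1) beta j * cos (th j) + eta) ^+ 2
          + (\sum_(j < k.+1) beta j * sin (th j)) ^+ 2)
  <= 1 - beta ord0 * eta / 2 * (1 - cos (th ord0)).
Proof.
move=> bpos /andP[e0 e1] esum.
rewrite !big_ord_recl in esum *.
set A := \sum_(i < k) _; set B := \sum_(i < k) _; set S := \sum_(i < k) _ in esum.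
have S0 : 0 <= S by apply: sumr_ge0 => j _; exact: ltW.
have hAB : Num.sqrt (A ^+ 2 + B ^+ 2) <= S.
  apply: le_trans (trisum _ _ _) _.
  apply: ler_sum => j _.
  rewrite !exprMn -mulrDr cos2Dsin2 mulr1 sqrtr_sqr ger0_norm //; exact: ltW.
set b := beta ord0 in esum *; set c := cos (th ord0); set sn := sin (th ord0).
have b0 : 0 < b by exact: bpos.
have hcs : sn ^+ 2 = 1 - c ^+ 2 by rewrite /sn /c -(cos2Dsin2 (th ord0)); ring.
have c1 : c <= 1 by exact: cos_le1.
have c2 : -1 <= c by exact: cos_geN1.
have main : Num.sqrt ((b * c + eta) ^+ 2 + (b * sn) ^+ 2) <= b + eta - b * eta / 2 * (1 - c).
  apply: sqrt_le.
    have : 0 <= b * eta * (1 - c) by apply: mulr_ge0; [apply: mulr_ge0|]; lra.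
    have : b * eta <= b by nra.
    nra.
  have h1 : 0 <= b * eta * (1 - c) * (2 - b - eta).
    apply: mulr_ge0; [apply: mulr_ge0; [apply: mulr_ge0|]|]; lra.
  have h2 := sqr_ge0 (b * eta * (1 - c)).
  rewrite exprMn hcs; nra.
rewrite (_ : b * c + A + eta = (b * c + eta) + A); last by ring.
apply: le_trans (tri2 _ _ _ _) _.
lra.
Qed.

Lemma ind_le1 (b : bool) : (b%:R : R) <= 1.
Proof. by case: b; rewrite ?ler01 ?lexx. Qed.

Lemma ind_ge0 (b : bool) : 0 <= (b%:R : R).
Proof. by case: b; rewrite ?ler01 ?lexx. Qed.

Lemma sum_ind (m : nat) (P : 'I_m -> bool) : \sum_(a < m) ((P a)%:R : R) <= m%:R.
Proof.
have -> : (m%:R : R) = \sum_(a < m) 1 by rewrite sumr_const card_ord.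
by apply: ler_sum => a _; exact: ind_le1.
Qed.

Lemma cnt1 (y : R) m : 0 <= y -> \sum_(a < m) (((a.+1)%:R < y)%R%:R : R) <= y.
Proof.
move=> y0; elim: m => [|m IH]; first by rewrite big_ord0.
rewrite big_ord_recr /=.
have [h|h] := ltP ((m.+1)%:R : R) y => /=.
  have := @sum_ind m (fun a : 'I_m => ((a.+1)%:R < y)%R).
  rewrite -natr1 in h; lra.
by rewrite addr0.
Qed.

Lemma cnt2 (y : R) m : 0 <= y -> \sum_(a < m) (((m - a)%:R < y)%R%:R : R) <= y.
Proof.
move=> y0; elim: m => [|m IH]; first by rewrite big_ord0.
rewrite big_ord_recl /= subn0.
under eq_bigr => a _ do rewrite /bump leq0n add1n subSS.
have [h|h] := ltP ((m.+1)%:R : R) y => /=.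
  have := @sum_ind m (fun a : 'I_m => ((m - a)%:R < y)%R).
  rewrite -natr1 in h; lra.
by rewrite add0r.
Qed.

Lemma onedim (m : nat) (t dl : R) : 0 <= t -> 0 <= dl ->
  \sum_(a < m) expR (- (t * (1 - cos (2 * pi * (a.+1)%:R / (m.+1)%:R)))) <=
  (m.+1)%:R * expR (- (t * dl ^+ 2)) + 2 * dl * (m.+1)%:R.
Proof.
move=> t0 dl0.
set d : R := (m.+1)%:R.
have d0 : 0 < d by rewrite /d ltr0Sn.
set y := dl * d.
have y0 : 0 <= y by rewrite /y mulr_ge0 // ltW.
set eps := expR (- (t * dl ^+ 2)).
have eps0 : 0 <= eps by exact: expR_ge0.
have pw : forall a : 'I_m, expR (- (t * (1 - cos (2 * pi * (a.+1)%:R / d)))) <=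
    eps + (((a.+1)%:R < y)%R%:R + (((m - a)%:R < y)%R%:R)).
  move=> a.
  have u0 : 0 <= 1 - cos (2 * pi * (a.+1)%:R / d) by rewrite subr_ge0 cos_le1.
  have [h1|h1] := ltP ((a.+1)%:R : R) y; have [h2|h2] := ltP ((m - a)%:R : R) y;
    last first.
    rewrite /= addr0 addr0 /eps ler_expR lerN2.
    apply: ler_wpM2l => //.
    set x := (a.+1)%:R / d.
    have x0 : 0 <= x by rewrite /x divr_ge0 // ltW.
    have am : (a < m)%N := ltn_ord a.
    have ex : (m - a)%:R / d = 1 - x.
      rewrite natrB ?(ltnW am) // /x /d -natr1; field.
      by rewrite natr1 pnatr_eq0.
    have hx : dl <= x by rewrite /x ler_pdivlMr.
    have h1x : dl <= 1 - x by rewrite -ex ler_pdivlMr.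
    rewrite -mulrA; apply: far => //.
    by rewrite -/x; apply/andP; split; lra.
  all: try (have : expR (- (t * (1 - cos (2 * pi * (a.+1)%:R / d)))) <= 1
    by rewrite expR_le1 oppr_le0 mulr_ge0).
  all: try (rewrite /= ?mulr1n ?mulr0n; lra).
apply: (@le_trans _ _ (\sum_(a < m) (eps + (((a.+1)%:R < y)%R%:R + (((m - a)%:R < y)%R%:R))))).
  by apply: ler_sum => a _; exact: pw.
rewrite !big_split /= sumr_const card_ord -mulr_natr.
have := cnt1 y m y0; have := cnt2 y m y0.
have : eps * m%:R <= eps * d by apply: ler_wpM2l => //; rewrite /d ler_nat.
rewrite /y; lra.
Qed.

Lemma sum_ffun_first k m (g : 'I_m -> R) :
  \sum_(h : {ffun 'I_k.+1 -> 'I_m}) g (h ord0) = (\sum_(a < m) g a) * (m%:R ^+ k).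
Proof.
pose F := fun (j : 'I_k.+1) (a : 'I_m) => if j == ord0 then g a else 1.
have E : forall h : {ffun 'I_k.+1 -> 'I_m}, g (h ord0) = \prod_(j < k.+1) F j (h j).
  move=> h; rewrite big_ord_recl /F eqxx big1 ?mulr1 // => j _.
under eq_bigr do rewrite E.
rewrite -bigA_distr_bigA big_ord_recl /F eqxx /=.
congr (_ * _).
by rewrite sumr_const card_ord prodr_const card_ord.
Qed.
End S.

Theorem lemma2p3 (R : realType) (i : nat) (beta : 'I_i -> R) (eta : R) :
  (1 <= i)%N ->
  (forall j, 0 < beta j < 1) -> 0 < eta < 1 ->
  eta = 1 - \sum_(j < i) beta j ->
  exists C : R, exists N : nat,
    forall (l n d : nat), (2 <= l)%N -> (i <= l.-1)%N ->
      (N <= n)%N -> (1 < d)%N ->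
      (d%:R ^+ l.-1)^-1 *
        \sum_(h : {ffun 'I_i -> 'I_(d.-1)})
          expsum_mod beta eta d (fun j => (h j).+1) ^+ n
      <= C * ln n%:R / Num.sqrt n%:R.
Proof.
case: i beta => [//|k] beta _ bb /andP[e0 e1] esum.
have bpos : forall j, 0 < beta j by move=> j; case/andP: (bb j).
set ka := beta ord0 * eta / 2.
have ka0 : 0 < ka by rewrite /ka divr_gt0 // mulr_gt0 // bpos.
set M := 1 + ka^-1.
exists 3, (Num.truncn (expR M)).+1.
move=> l n d l2 il Nn d1.
have nM : expR M < n%:R.
  apply: lt_le_trans (truncnS_gt _) _; by rewrite ler_nat.
have n0 : 0 < n%:R :> R by apply: lt_trans nM; exact: expR_gt0.
set L := ln (n%:R : R).
have LM : M <= L.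
  rewrite /L -(expRK M) ler_ln ?ltW // posrE expR_gt0 //.
have kinv : ka * ka^-1 = 1 by rewrite mulfV // gt_eqF.
have kinv0 : 0 < ka^-1 by rewrite invr_gt0.
have L1 : 1 <= L by rewrite /M in LM; lra.
have kL : 1 <= ka * L.
  have : ka * M <= ka * L by rewrite ler_pM2l.
  rewrite /M mulrDr kinv mulr1; lra.
set s := Num.sqrt (n%:R : R).
have s0 : 0 < s by rewrite /s sqrtr_gt0.
have s2 : s ^+ 2 = n%:R by rewrite /s sqr_sqrtr // ltW.
set w := s^-1.
have w0 : 0 < w by rewrite /w invr_gt0.
have nw : n%:R * (w * w) = 1.
  by rewrite -s2 /w expr2 mulrACA mulfV ?gt_eqF // mulr1.
have n1 : 1 <= n%:R :> R.
  rewrite ler1n; move: Nn; case: n {nM n0 L LM L1 kL s s0 s2 w w0 nw} => //.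
have w1 : w <= 1.
  rewrite /w invr_le1 ?unitfE ?gt_eqF //; nra.
case: d d1 => [//|m] d1.
set d := (m.+1)%:R : R.
have d0 : 0 < d by rewrite /d ltr0Sn.
set g := fun a : 'I_m => expR (- (n%:R * ka * (1 - cos (2 * pi * (a.+1)%:R / d)))).
have pw : forall h : {ffun 'I_k.+1 -> 'I_m},
    expsum_mod beta eta m.+1 (fun j => (h j).+1) ^+ n <= g (h ord0).
  move=> h.
  have G := @geo R k beta eta (fun j => 2 * pi * ((h j).+1)%:R / d) bpos
    (introT andP (conj e0 e1)) esum.
  rewrite /expsum_mod.
  set E := Num.sqrt _ in G *.
  set u := 1 - cos _ in G.
  rewrite -/ka in G.
  have E0 : 0 <= E := sqrtr_ge0 _.
  have u0 : 0 <= 1 - ka * u by apply: le_trans G.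
  apply: (le_trans (lerXn2r n _ _ G)); rewrite ?nnegrE //.
  apply: (@le_trans _ _ (expR (- (ka * u)) ^+ n)).
    apply: lerXn2r; rewrite ?nnegrE ?expR_ge0 //.
    have := expR_ge1Dx (- (ka * u)); lra.
  rewrite -expRM_natl /g -/u.
  by rewrite (_ : n%:R * - (ka * u) = - (n%:R * ka * u)) //; ring.
have S1 : \sum_(h : {ffun 'I_k.+1 -> 'I_m}) expsum_mod beta eta m.+1 (fun j => (h j).+1) ^+ n
    <= (\sum_(a < m) g a) * m%:R ^+ k.
  rewrite -sum_ffun_first; apply: ler_sum => h _; exact: pw.
set dl := L * w.
have dl0 : 0 <= dl by rewrite /dl mulr_ge0 // ?ltW //; lra.
set eps := expR (- (n%:R * ka * dl ^+ 2)).
have S2 : \sum_(a < m) g a <= d * eps + 2 * dl * d.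
  rewrite /g /eps /d; apply: onedim => //; apply: mulr_ge0; exact: ltW.
have nz : n%:R != 0 :> R by rewrite gt_eqF.
have ww : w * w = n%:R^-1.
  by apply: (mulfI nz); rewrite mulfV // nw.
have epsb : eps <= w * w.
  apply: (@le_trans _ _ (expR (- L))).
    rewrite ler_expR (_ : n%:R * ka * dl ^+ 2 = ka * L * L * (n%:R * (w * w))); last first.
      by rewrite /dl; ring.
    rewrite nw mulr1; nra.
  by rewrite expRN /L lnK ?posrE // ww.
have eps0 : 0 <= eps by exact: expR_ge0.
set P := d ^+ l.-1.
have P0 : 0 < P by rewrite /P exprn_gt0.
have dP : d * m%:R ^+ k <= P.
  apply: (@le_trans _ _ (d ^+ k.+1)).
    rewrite exprS; apply: ler_wpM2l; first exact: ltW.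
    apply: lerXn2r; rewrite ?nnegrE ?ler0n //.
    by rewrite /d ler_nat.
  by apply: ler_weXn2l => //; rewrite /d ler1n.
have mk0 : 0 <= m%:R ^+ k :> R by rewrite exprn_ge0 // ler0n.
have SB : \sum_(h : {ffun 'I_k.+1 -> 'I_m}) expsum_mod beta eta m.+1 (fun j => (h j).+1) ^+ n
    <= P * (eps + 2 * dl).
  apply: le_trans S1 _.
  apply: (@le_trans _ _ ((d * eps + 2 * dl * d) * m%:R ^+ k)).
    by apply: ler_wpM2r.
  rewrite (_ : (d * eps + 2 * dl * d) * m%:R ^+ k = (eps + 2 * dl) * (d * m%:R ^+ k)); last by ring.
  rewrite [X in _ <= X]mulrC; apply: ler_wpM2l => //; lra.
apply: (@le_trans _ _ (P^-1 * (P * (eps + 2 * dl)))).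
  apply: ler_wpM2l; first by rewrite invr_ge0 ltW.
  exact: SB.
rewrite mulKf ?gt_eqF //.
have : w * w <= w by nra.
have : w <= L * w by nra.
rewrite /dl; lra.
Qed.
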